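(* Let $H\subseteq G$ be a closed inclusion of affine algebraic groups over an algebraically closed field $\Bbbk$. If $H$ is exact in $G$, then $H$ is observable in $G$.
   Context: $H$ acts on $\Bbbk[G]$ by right translations $(x\cdot f)(y)=f(yx)$, making $\Bbbk[G]$ a rational $H$--module algebra. A $(\Bbbk[G],H)$--module is a rational $H$--module $M$ which is a $\Bbbk[G]$--module with $x\cdot(rm)=(x\cdot r)(x\cdot m)$; morphisms are $\Bbbk[G]$--linear $H$--equivariant maps. $H$ is exact in $G$ if for every short exact sequence $0\to P\to Q\to R\to0$ of $(\Bbbk[G],H)$--modules, the sequence $0\to{}^HP\to{}^HQ\to{}^HR\to0$ of $H$--fixed vectors is exact. A closed subgroup $H\subseteq G$ is observable in $G$ if every finite dimensional rational $H$--module is isomorphic to an $H$--submodule of the restriction to $H$ of some finite dimensional rational $G$--module. *)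

(* Defs.v *)
(* Affine algebraic groups over an algebraically closed
   field k are modelled classically, as Zariski-closed subgroups of GL_n(k)
   (every affine algebraic group admits such a closed embedding). *)
From HB Require Import structures.
From mathcomp Require Import all_boot all_order all_algebra.
Set Implicit Arguments. Unset Strict Implicit. Unset Printing Implicit Defensive.
Import GRing.Theory.
Local Open Scope ring_scope.

Section AlgGroups.
Variables (k : fieldType) (n : nat).
Local Notation Mat := 'M[k]_n.

Inductive polyfun : (Mat -> k) -> Prop :=
| pf_const (c : k) : polyfun (fun _ => c)
| pf_coord (i j : 'I_n) : polyfun (fun A => A i j)
| pf_add f g : polyfun f -> polyfun g -> polyfun (fun A => f A + g A)
| pf_mul f g : polyfun f -> polyfun g -> polyfun (fun A => f A * g A).

Definition zariski_closed (X : Mat -> Prop) : Prop :=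
  exists S : (Mat -> k) -> Prop, (forall p, S p -> polyfun p) /\
    forall A, X A <-> (A \in unitmx /\ forall p, S p -> p A = 0).

Definition is_subgroup (X : Mat -> Prop) : Prop :=
  [/\ X 1%:M, (forall A B, X A -> X B -> X (A *m B)) &
      (forall A, X A -> X (invmx A))].

Definition closed_subgroup (X : Mat -> Prop) : Prop :=
  zariski_closed X /\ is_subgroup X.

(* f restricted to X is a regular function on X, i.e. an element of k[X]
   (k[GL_n] = k[x_ij, 1/det]) *)
Definition regular_on (X : Mat -> Prop) (f : Mat -> k) : Prop :=
  exists (p : Mat -> k) (N : nat), polyfun p /\
    forall A, X A -> f A = p A / \det A ^+ N.

Record rational_module (X : Mat -> Prop) (M : lmodType k)
    (act : Mat -> M -> M) : Prop := {
  rm_lin : forall x, X x -> forall (a : k) (u v : M),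
      act x (a *: u + v) = a *: act x u + act x v;
  rm_one : forall m, act 1%:M m = m;
  rm_mul : forall x y m, X x -> X y -> act (x *m y) m = act x (act y m);
  rm_loc : forall m, exists (r : nat) (ms : 'I_r -> M) (fs : 'I_r -> Mat -> k),
      (forall i, regular_on X (fs i)) /\
      forall x, X x -> act x m = \sum_(i < r) fs i x *: ms i }.

(* (k[G],H)-modules: mact f m is the action of the regular function f
   (as an element of k[G]) on m; act x is the H-action. *)
Record kGH_module (G H : Mat -> Prop) (M : lmodType k)
    (mact : (Mat -> k) -> M -> M) (act : Mat -> M -> M) : Prop := {
  km_rat : rational_module H act;
  km_lin : forall f, regular_on G f -> forall (a : k) (u v : M),
      mact f (a *: u + v) = a *: mact f u + mact f v;
  km_add : forall f g m, regular_on G f -> regular_on G g ->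
      mact (fun A => f A + g A) m = mact f m + mact g m;
  km_mul : forall f g m, regular_on G f -> regular_on G g ->
      mact (fun A => f A * g A) m = mact f (mact g m);
  km_const : forall (c : k) m, mact (fun _ => c) m = c *: m;
  km_ext : forall f g, regular_on G f -> (forall A, G A -> f A = g A) ->
      mact f = mact g;
  km_compat : forall x f m, H x -> regular_on G f ->
      act x (mact f m) = mact (fun y => f (y *m x)) (act x m) }.

Definition kGH_morphism (G H : Mat -> Prop) (P Q : lmodType k)
    (mP : (Mat -> k) -> P -> P) (aP : Mat -> P -> P)
    (mQ : (Mat -> k) -> Q -> Q) (aQ : Mat -> Q -> Q) (phi : P -> Q) : Prop :=
  [/\ forall (a : k) (u v : P), phi (a *: u + v) = a *: phi u + phi v,
      forall f m, regular_on G f -> phi (mP f m) = mQ f (phi m) &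
      forall x m, H x -> phi (aP x m) = aQ x (phi m)].

Definition fixed_vec (H : Mat -> Prop) (M : lmodType k)
    (act : Mat -> M -> M) (m : M) : Prop := forall x, H x -> act x m = m.

Definition exact_in (G H : Mat -> Prop) : Prop :=
  forall (P Q R : lmodType k)
    (mP : (Mat -> k) -> P -> P) (aP : Mat -> P -> P)
    (mQ : (Mat -> k) -> Q -> Q) (aQ : Mat -> Q -> Q)
    (mR : (Mat -> k) -> R -> R) (aR : Mat -> R -> R)
    (f : P -> Q) (g : Q -> R),
    kGH_module G H mP aP -> kGH_module G H mQ aQ -> kGH_module G H mR aR ->
    kGH_morphism G H mP aP mQ aQ f -> kGH_morphism G H mQ aQ mR aR g ->
    injective f -> (forall q, g q = 0 <-> exists p, f p = q) ->
    (forall r, exists q, g q = r) ->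
    [/\ (forall p1 p2, fixed_vec H aP p1 -> fixed_vec H aP p2 -> f p1 = f p2 -> p1 = p2),
        (forall q, fixed_vec H aQ q -> g q = 0 ->
           exists p, fixed_vec H aP p /\ f p = q) &
        (forall r, fixed_vec H aR r -> exists q, fixed_vec H aQ q /\ g q = r)].

Definition observable (G H : Mat -> Prop) : Prop :=
  forall (V : vectType k) (aV : Mat -> V -> V), rational_module H aV ->
    exists (W : vectType k) (aW : Mat -> W -> W) (phi : V -> W),
      [/\ rational_module G aW,
          forall (a : k) (u v : V), phi (a *: u + v) = a *: phi u + phi v,
          injective phi &
          forall x v, H x -> phi (aV x v) = aW x (phi v)].

End AlgGroups.

(* Main.v *)
From HB Require Import structures.
From mathcomp Require Import all_boot all_order all_algebra.
From Stdlib Require Import FunctionalExtensionality ProofIrrelevance.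
From mathcomp Require Import boolp.
Require Import Defs.
From mathcomp Require Import ring zify.
Set Implicit Arguments. Unset Strict Implicit. Unset Printing Implicit Defensive.
Import GRing.Theory.
Local Open Scope ring_scope.

Section Reg.
Variables (k : fieldType) (n : nat).
Local Notation Mat := 'M[k]_n.
Implicit Types (f g p q : Mat -> k) (X K : Mat -> Prop).

Lemma pf_ext f g : (forall A, f A = g A) -> polyfun f -> polyfun g.
Proof. by move=> e; rewrite (functional_extensionality _ _ e). Qed.

Lemma pf_sum (I : Type) (s : seq I) (F : I -> Mat -> k) :
  (forall i, polyfun (F i)) -> polyfun (fun A => \sum_(i <- s) F i A).
Proof.
move=> hF; elim: s => [|i s IH].
  by apply: (pf_ext (f := fun _ => 0)) => [A|]; rewrite ?big_nil //; apply: pf_const.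
apply: (pf_ext (f := fun A => F i A + \sum_(j <- s) F j A)) => [A|].
  by rewrite big_cons.
exact: pf_add.
Qed.

Lemma pf_prod (I : Type) (s : seq I) (F : I -> Mat -> k) :
  (forall i, polyfun (F i)) -> polyfun (fun A => \prod_(i <- s) F i A).
Proof.
move=> hF; elim: s => [|i s IH].
  by apply: (pf_ext (f := fun _ => 1)) => [A|]; rewrite ?big_nil //; apply: pf_const.
apply: (pf_ext (f := fun A => F i A * \prod_(j <- s) F j A)) => [A|].
  by rewrite big_cons.
exact: pf_mul.
Qed.

Lemma pf_exp f m : polyfun f -> polyfun (fun A => f A ^+ m).
Proof.
move=> hf; elim: m => [|m IH].
  by apply: (pf_ext (f := fun _ => 1)) => [A|]; rewrite ?expr0 //; apply: pf_const.
apply: (pf_ext (f := fun A => f A * f A ^+ m)) => [A|]; first by rewrite exprS.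
exact: pf_mul.
Qed.

Lemma pf_det m (M : Mat -> 'M[k]_m) :
  (forall i j, polyfun (fun A => M A i j)) -> polyfun (fun A => \det (M A)).
Proof.
move=> hM; rewrite /determinant.
apply: pf_sum => s; apply: pf_mul; first exact: pf_const.
by apply: pf_prod => i; apply: hM.
Qed.

Lemma pf_detA : polyfun (fun A : Mat => \det A).
Proof. by apply: (@pf_det n (fun A => A)) => i j; apply: pf_coord. Qed.

Lemma pf_adj i j : polyfun (fun A : Mat => \adj A i j).
Proof.
apply: (pf_ext (f := fun A => cofactor A j i)) => [A|]; first by rewrite mxE.
rewrite /cofactor; apply: pf_mul; first exact: pf_const.
by apply: (@pf_det n.-1 (fun A => row' j (col' i A))) => a b; apply: (pf_ext (f := fun A => A _ _)) => [A|]; [rewrite !mxE | apply: pf_coord].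
Qed.

Lemma pf_rmul f (x : Mat) : polyfun f -> polyfun (fun A => f (A *m x)).
Proof.
elim=> {f} [c|i j|f g _ hf _ hg|f g _ hf _ hg].
- exact: pf_const.
- apply: (pf_ext (f := fun A => \sum_(l <- index_enum 'I_n) A i l * x l j)) => [A|].
    by rewrite mxE.
  by apply: pf_sum => l; apply: pf_mul; [apply: pf_coord | apply: pf_const].
- exact: pf_add.
- exact: pf_mul.
Qed.

End Reg.

Section Reg2.
Variables (k : fieldType) (n : nat).
Local Notation Mat := 'M[k]_n.
Implicit Types (f g p q : Mat -> k) (X Y K : Mat -> Prop).

Lemma reg_ext X f g : regular_on X f -> (forall A, X A -> f A = g A) -> regular_on X g.
Proof. by case=> p [N [hp e]] fg; exists p, N; split => // A XA; rewrite -fg ?e. Qed.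

Lemma reg_sub X Y f : (forall A, Y A -> X A) -> regular_on X f -> regular_on Y f.
Proof. by move=> YX [p [N [hp e]]]; exists p, N; split => // A /YX; apply: e. Qed.

Lemma reg_pf X p : polyfun p -> regular_on X p.
Proof. by move=> hp; exists p, 0%N; split => // A _; rewrite expr0 divr1. Qed.

Lemma reg_const X c : regular_on X (fun _ => c).
Proof. exact/reg_pf/pf_const. Qed.

Lemma reg_mul X f g : regular_on X f -> regular_on X g ->
  regular_on X (fun A => f A * g A).
Proof.
case=> p [N [hp ep]] [q [M [hq eq]]]; exists (fun A => p A * q A), (N + M)%N.
split; first exact: pf_mul.
by move=> A XA; rewrite ep // eq // exprD invfM; rewrite mulrACA.
Qed.

Lemma reg_invdet X : regular_on X (fun A => (\det A)^-1).
Proof. by exists (fun _ => 1), 1%N; split; [apply: pf_const | move=> A _; rewrite expr1 div1r]. Qed.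

Lemma reg_det X : regular_on X (fun A => \det A).
Proof. exact/reg_pf/pf_detA. Qed.

Variable X : Mat -> Prop.
Hypothesis hU : forall A, X A -> A \in unitmx.

Lemma detX_neq0 A : X A -> \det A != 0.
Proof. by move=> /hU; rewrite unitmxE unitfE. Qed.

Lemma reg_add f g : regular_on X f -> regular_on X g ->
  regular_on X (fun A => f A + g A).
Proof.
case=> p [N [hp ep]] [q [M [hq eq]]].
exists (fun A => p A * \det A ^+ M + q A * \det A ^+ N), (N + M)%N.
split.
  by apply: pf_add; apply: pf_mul => //; apply: pf_exp; apply: pf_detA.
move=> A XA; rewrite ep // eq //; have d0 := detX_neq0 XA.
rewrite exprD; field; by rewrite ?expf_neq0.
Qed.

Lemma reg_sum (I : Type) (s : seq I) (F : I -> Mat -> k) :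
  (forall i, regular_on X (F i)) -> regular_on X (fun A => \sum_(i <- s) F i A).
Proof.
move=> hF; elim: s => [|i s IH].
  by apply: (reg_ext (reg_const X 0)) => A _; rewrite big_nil.
apply: (reg_ext (reg_add (hF i) IH)) => A _; by rewrite big_cons.
Qed.

Lemma reg_rmul f x : (forall y, X y -> X (y *m x)) -> regular_on X f ->
  regular_on X (fun y => f (y *m x)).
Proof.
move=> hX [p [N [hp ep]]].
exists (fun y => p (y *m x) * (\det x ^+ N)^-1), N; split.
  by apply: pf_mul; [apply: pf_rmul | apply: pf_const].
move=> y Xy /=; rewrite ep; last exact: hX.
by rewrite det_mulmx exprMn invfM mulrA mulrAC.
Qed.

End Reg2.

Section Inv.
Variables (k : fieldType) (n : nat).
Local Notation Mat := 'M[k]_n.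

Lemma pf_inv (p : Mat -> k) : polyfun p -> exists (q : Mat -> k) (M : nat),
  polyfun q /\ forall A, A \in unitmx -> p (invmx A) = q A / \det A ^+ M.
Proof.
elim=> {p} [c|i j|f g _ [q1 [M1 [hq1 e1]]] _ [q2 [M2 [hq2 e2]]]|f g _ [q1 [M1 [hq1 e1]]] _ [q2 [M2 [hq2 e2]]]].
- by exists (fun _ => c), 0%N; split; [apply: pf_const | move=> A _; rewrite expr0 divr1].
- exists (fun A => \adj A i j), 1%N; split; first exact: pf_adj.
  by move=> A uA; rewrite /invmx uA mxE expr1 mulrC.
- exists (fun A => q1 A * \det A ^+ M2 + q2 A * \det A ^+ M1), (M1 + M2)%N.
  split. by apply: pf_add; apply: pf_mul => //; apply: pf_exp; apply: pf_detA.
  move=> A uA; rewrite e1 // e2 //.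
  have d0 : \det A != 0 by rewrite -unitfE -unitmxE.
  rewrite exprD; field; by rewrite ?expf_neq0.
- exists (fun A => q1 A * q2 A), (M1 + M2)%N; split; first exact: pf_mul.
  by move=> A uA; rewrite e1 // e2 // exprD invfM mulrACA.
Qed.

Lemma reg_inv (X : Mat -> Prop) (f : Mat -> k) :
  (forall A, X A -> A \in unitmx) -> (forall A, X A -> X (invmx A)) ->
  regular_on X f -> regular_on X (fun A => f (invmx A)).
Proof.
move=> hU hI [p [N [hp ep]]].
have [q [M [hq eq]]] := pf_inv hp.
exists (fun A => q A * \det A ^+ N), M; split.
  by apply: pf_mul => //; apply: pf_exp; apply: pf_detA.
move=> A XA /=; rewrite ep; last exact: hI.
rewrite eq; last exact: hU.
by rewrite det_inv exprVn invrK mulrAC.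
Qed.

Lemma pf_family (p : Mat -> k) : polyfun p ->
  exists (I : finType) (a : I -> Mat -> k) (c : I -> I -> Mat -> k) (b : I -> k),
    [/\ forall i, polyfun (a i), forall i j, polyfun (c i j),
        forall A, p A = \sum_i b i * a i A &
        forall i y x, a i (y *m x) = \sum_j c i j x * a j y].
Proof.
elim=> {p} [c|i j|f g _ [I1 [a1 [c1 [b1 [ha1 hc1 e1 t1]]]]] _ [I2 [a2 [c2 [b2 [ha2 hc2 e2 t2]]]]]
        |f g _ [I1 [a1 [c1 [b1 [ha1 hc1 e1 t1]]]]] _ [I2 [a2 [c2 [b2 [ha2 hc2 e2 t2]]]]]].
- exists 'I_1, (fun _ _ => 1), (fun _ _ _ => 1), (fun _ => c); split.
  + by move=> _; apply: pf_const.
  + by move=> _ _; apply: pf_const.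
  + by move=> A; rewrite big_ord1 mulr1.
  + by move=> _ y x; rewrite big_ord1 mulr1.
- exists 'I_n, (fun l A => A i l), (fun l l' x => x l' l), (fun l => (l == j)%:R); split.
  + by move=> l; apply: pf_coord.
  + by move=> l l'; apply: pf_coord.
  + move=> A; rewrite (bigD1 j) //= eqxx mul1r big1 ?addr0 // => l /negbTE ->.
    by rewrite mul0r.
  + by move=> l y x; rewrite mxE; apply: eq_bigr => l' _; rewrite mulrC.
- exists (I1 + I2)%type, (fun i => match i with inl i => a1 i | inr i => a2 i end),
    (fun i j => match i, j with inl i, inl j => c1 i j | inr i, inr j => c2 i j | _, _ => fun _ => 0 end),
    (fun i => match i with inl i => b1 i | inr i => b2 i end); split.
  + by case.
  + by case=> i [] j //; apply: pf_const.
  + by move=> A; rewrite big_sumType /= e1 e2.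
  + case=> i y x; rewrite big_sumType /=.
      by rewrite t1 [X in _ + X]big1 ?addr0 // => j _; rewrite mul0r.
    by rewrite t2 [X in X + _]big1 ?add0r // => j _; rewrite mul0r.
- exists (I1 * I2)%type, (fun i A => a1 i.1 A * a2 i.2 A),
    (fun i j x => c1 i.1 j.1 x * c2 i.2 j.2 x), (fun i => b1 i.1 * b2 i.2); split.
  + by move=> i; apply: pf_mul.
  + by move=> i j; apply: pf_mul.
  + move=> A; rewrite e1 e2 big_distrlr /= pair_big /=.
    by apply: eq_bigr => -[i1 i2] _ /=; rewrite mulrACA.
  + move=> [i1 i2] y x /=; rewrite t1 t2 big_distrlr /= pair_big /=.
    by apply: eq_bigr => -[j1 j2] _ /=; rewrite mulrACA.
Qed.

End Inv.

Section LinSum.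
Variables (k : fieldType) (E E' : lmodType k).
Definition islin (L : E -> E') := forall a u v, L (a *: u + v) = a *: L u + L v.

Lemma islin0 L : islin L -> L 0 = 0.
Proof. by move=> hL; have := hL (-1) 0 0; rewrite scaler0 addr0 scaleN1r addNr. Qed.
Lemma islinD L : islin L -> forall u v, L (u + v) = L u + L v.
Proof. by move=> hL u v; have := hL 1 u v; rewrite !scale1r. Qed.
Lemma islinZ L : islin L -> forall a u, L (a *: u) = a *: L u.
Proof. by move=> hL a u; rewrite -[a *: u]addr0 hL islin0 // addr0. Qed.
Lemma islin_sum L (I : Type) (s : seq I) (F : I -> E) : islin L ->
  L (\sum_(i <- s) F i) = \sum_(i <- s) L (F i).
Proof.
move=> hL; elim: s => [|i s IH]; first by rewrite !big_nil islin0.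
by rewrite !big_cons islinD // IH.
Qed.
End LinSum.

Section Expand.
Variables (k : fieldType) (n : nat).
Local Notation Mat := 'M[k]_n.

Lemma reg_family (X : Mat -> Prop) (f : Mat -> k) : regular_on X f ->
  exists (I : finType) (A : I -> Mat -> k) (C : I -> I -> Mat -> k) (b : I -> k),
    [/\ forall i Y, regular_on Y (A i), forall i j Y, regular_on Y (C i j),
        forall y, X y -> f y = \sum_i b i * A i y &
        forall i y x, A i (y *m x) = \sum_j C i j x * A j y].
Proof.
case=> p [N [hp ep]].
have [I [a [c [b [ha hc e t]]]]] := pf_family hp.
exists I, (fun i A => a i A / \det A ^+ N), (fun i j x => c i j x / \det x ^+ N), b.
split.
- by move=> i Y; exists (a i), N; split.
- by move=> i j Y; exists (c i j), N; split.
- by move=> y Xy; rewrite ep // e mulr_suml; apply: eq_bigr => i _; rewrite mulrA.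
- move=> i y x; rewrite t det_mulmx exprMn invfM mulr_suml; apply: eq_bigr => j _.
  ring.
Qed.

Definition expand (K : Mat -> Prop) (E : lmodType k) (Phi : Mat -> E) :=
  exists (I : finType) (g : I -> Mat -> k) (S : I -> E),
    (forall i, regular_on K (g i)) /\ forall x, K x -> Phi x = \sum_i g i x *: S i.

Variable (K : Mat -> Prop) (E E' : lmodType k).

Lemma expand_ext (Phi Psi : Mat -> E) : expand K Phi ->
  (forall x, K x -> Phi x = Psi x) -> expand K Psi.
Proof. by case=> I [g [S [hg e]]] h; exists I, g, S; split => // x Kx; rewrite -h ?e. Qed.

Lemma expand_const (e : E) : expand K (fun _ => e).
Proof.
exists 'I_1, (fun _ _ => 1), (fun _ => e); split; first by move=> _; apply: reg_const.
by move=> x _; rewrite big_ord1 scale1r.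
Qed.

Lemma expand_add (Phi Psi : Mat -> E) : expand K Phi -> expand K Psi ->
  expand K (fun x => Phi x + Psi x).
Proof.
case=> I1 [g1 [S1 [hg1 e1]]] [I2 [g2 [S2 [hg2 e2]]]].
exists (I1 + I2)%type, (fun i => match i with inl i => g1 i | inr i => g2 i end),
  (fun i => match i with inl i => S1 i | inr i => S2 i end); split; first by case.
by move=> x Kx; rewrite big_sumType /= e1 ?e2.
Qed.

Lemma expand_sum (I : Type) (s : seq I) (F : I -> Mat -> E) :
  (forall i, expand K (F i)) -> expand K (fun x => \sum_(i <- s) F i x).
Proof.
move=> hF; elim: s => [|i s IH].
  by apply: (expand_ext (expand_const 0)) => x _; rewrite big_nil.
by apply: (expand_ext (expand_add (hF i) IH)) => x _; rewrite big_cons.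
Qed.

Lemma expand_mulf (g : Mat -> k) (Phi : Mat -> E) : regular_on K g -> expand K Phi ->
  expand K (fun x => g x *: Phi x).
Proof.
move=> hg [I [h [S [hh e]]]]; exists I, (fun i x => g x * h i x), S; split.
  by move=> i; apply: reg_mul.
by move=> x Kx; rewrite e // scaler_sumr; apply: eq_bigr => i _; rewrite scalerA.
Qed.

Lemma expand_lin (L : E -> E') (Phi : Mat -> E) : islin L -> expand K Phi ->
  expand K (fun x => L (Phi x)).
Proof.
move=> hL [I [h [S [hh e]]]]; exists I, h, (fun i => L (S i)); split => // x Kx.
by rewrite e // islin_sum //; apply: eq_bigr => i _; rewrite islinZ.
Qed.

Lemma expand_sub (K' : Mat -> Prop) (Phi : Mat -> E) : (forall x, K' x -> K x) ->
  expand K Phi -> expand K' Phi.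
Proof.
move=> sK [I [h [S [hh e]]]]; exists I, h, S; split.
  by move=> i; apply: reg_sub (hh i).
by move=> x /sK; apply: e.
Qed.

Lemma expand_inv (Phi : Mat -> E) : (forall A, K A -> A \in unitmx) ->
  (forall A, K A -> K (invmx A)) -> expand K Phi -> expand K (fun x => Phi (invmx x)).
Proof.
move=> hU hI [I [h [S [hh e]]]]; exists I, (fun i x => h i (invmx x)), S; split.
  by move=> i; apply: reg_inv.
by move=> x Kx; apply: e; apply: hI.
Qed.

Lemma expand_rmul (Phi : Mat -> E) (x0 : Mat) : (forall A, K A -> A \in unitmx) ->
  (forall A, K A -> K (A *m x0)) -> expand K Phi -> expand K (fun x => Phi (x *m x0)).
Proof.
move=> hU hX [I [h [S [hh e]]]]; exists I, (fun i x => h i (x *m x0)), S; split.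
  by move=> i; apply: reg_rmul.
by move=> x Kx; apply: e; apply: hX.
Qed.

Lemma expand_ord (Phi : Mat -> E) : expand K Phi ->
  exists r (g : 'I_r -> Mat -> k) (S : 'I_r -> E),
    (forall i, regular_on K (g i)) /\ forall x, K x -> Phi x = \sum_(i < r) g i x *: S i.
Proof.
case=> I [h [S [hh e]]]; exists #|I|, (fun j => h (enum_val j)), (fun j => S (enum_val j)).
split => // x Kx; rewrite e // -(big_enum_val (fun i => h i x *: S i)).
by apply: eq_bigl => i; rewrite inE.
Qed.

Lemma ord_expand (Phi : Mat -> E) r (g : 'I_r -> Mat -> k) (S : 'I_r -> E) :
  (forall i, regular_on K (g i)) -> (forall x, K x -> Phi x = \sum_(i < r) g i x *: S i) ->
  expand K Phi.
Proof. by move=> hg e; exists 'I_r, g, S. Qed.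

End Expand.

Definition good (k : fieldType) (n : nat) (X Z : 'M[k]_n -> Prop) (E : lmodType k)
  (F : 'M[k]_n -> E) :=
  [/\ forall A, ~ X A -> F A = 0, forall A, Z A -> F A = 0 & expand X F].

Record car (k : fieldType) (n : nat) (X Z : 'M[k]_n -> Prop) (E : lmodType k) :=
  Car { cf : 'M[k]_n -> E; cgood : good X Z cf }.

HB.instance Definition _ k n X Z E := gen_eqMixin (@car k n X Z E).
HB.instance Definition _ k n X Z E := gen_choiceMixin (@car k n X Z E).

Section CarOps.
Variables (k : fieldType) (n : nat) (X Z : 'M[k]_n -> Prop) (E : lmodType k).
Local Notation C := (@car k n X Z E).

Lemma car_ext (u v : C) : (forall A, cf u A = cf v A) -> u = v.
Proof.
case: u v => [f hf] [g hg] /= e.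
have efg := functional_extensionality _ _ e; subst g.
by congr Car; apply: proof_irrelevance.
Qed.

Lemma good0 : good X Z (fun _ => (0 : E)).
Proof. by split => // ; apply: expand_const. Qed.

Lemma goodD (f g : 'M[k]_n -> E) : good X Z f -> good X Z g -> good X Z (fun A => f A + g A).
Proof.
case=> f1 f2 f3 [g1 g2 g3]; split.
- by move=> A hA; rewrite f1 // g1 // addr0.
- by move=> A hA; rewrite f2 // g2 // addr0.
- exact: expand_add.
Qed.

Lemma goodL (E' : lmodType k) (L : E -> E') (f : 'M[k]_n -> E) : islin L ->
  good X Z f -> good X Z (fun A => L (f A)).
Proof.
move=> hL [f1 f2 f3]; split.
- by move=> A hA; rewrite f1 // islin0.
- by move=> A hA; rewrite f2 // islin0.
- exact: expand_lin.
Qed.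

Lemma islinN : islin (fun e : E => - e).
Proof. by move=> a u v; rewrite opprD scalerN. Qed.
Lemma islinZc (c : k) : islin (fun e : E => c *: e).
Proof. by move=> a u v; rewrite scalerDr !scalerA mulrC. Qed.

Definition car0 : C := Car good0.
Definition carD (u v : C) : C := Car (goodD (cgood u) (cgood v)).
Definition carN (u : C) : C := Car (goodL islinN (cgood u)).
Definition carZ (c : k) (u : C) : C := Car (goodL (islinZc c) (cgood u)).

Lemma carA : associative carD. Proof. by move=> u v w; apply: car_ext => A /=; rewrite addrA. Qed.
Lemma carC : commutative carD. Proof. by move=> u v; apply: car_ext => A /=; rewrite addrC. Qed.
Lemma car0r : left_id car0 carD. Proof. by move=> u; apply: car_ext => A /=; rewrite add0r. Qed.
Lemma carNr : left_inverse car0 carN carD. Proof. by move=> u; apply: car_ext => A /=; rewrite addNr. Qed.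
Lemma carZA a b u : carZ a (carZ b u) = carZ (a * b) u.
Proof. by apply: car_ext => A /=; rewrite scalerA. Qed.
Lemma carZ1 : left_id 1 carZ. Proof. by move=> u; apply: car_ext => A /=; rewrite scale1r. Qed.
Lemma carZDr : right_distributive carZ carD.
Proof. by move=> a u v; apply: car_ext => A /=; rewrite scalerDr. Qed.
Lemma carZDl v : {morph carZ^~ v : a b / a + b >-> carD a b}.
Proof. by move=> a b; apply: car_ext => A /=; rewrite scalerDl. Qed.
End CarOps.

HB.instance Definition _ (k : fieldType) (n : nat) (X Z : 'M[k]_n -> Prop) (E : lmodType k) := GRing.isZmodule.Build (@car k n X Z E)
  (@carA k n X Z E) (@carC k n X Z E) (@car0r k n X Z E) (@carNr k n X Z E).
HB.instance Definition _ (k : fieldType) (n : nat) (X Z : 'M[k]_n -> Prop) (E : lmodType k) := GRing.Zmodule_isLmodule.Build k (@car k n X Z E)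
  (@carZA k n X Z E) (@carZ1 k n X Z E) (@carZDr k n X Z E) (@carZDl k n X Z E).

Section CarFacts.
Variables (k : fieldType) (n : nat) (X Z : 'M[k]_n -> Prop) (E : lmodType k).
Local Notation C := (@car k n X Z E).
Lemma cfD (u v : C) A : cf (u + v) A = cf u A + cf v A. Proof. by []. Qed.
Lemma cfZ a (u : C) A : cf (a *: u) A = a *: cf u A. Proof. by []. Qed.
Lemma cf0 A : cf (0 : C) A = 0. Proof. by []. Qed.
Lemma cfN (u : C) A : cf (- u) A = - cf u A. Proof. by []. Qed.
Lemma cf_sum (I : Type) (s : seq I) (F : I -> C) A :
  cf (\sum_(i <- s) F i) A = \sum_(i <- s) cf (F i) A.
Proof.
elim: s => [|i s IH]; first by rewrite !big_nil.
by rewrite !big_cons cfD IH.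
Qed.
End CarFacts.

Section Act.
Variables (k : fieldType) (n : nat).
Local Notation Mat := 'M[k]_n.
Variables (X Z G K : Mat -> Prop) (E : lmodType k) (T : Mat -> E -> E).
Local Notation C := (@car k n X Z E).

Hypothesis hXu : forall A, X A -> A \in unitmx.
Hypothesis hGu : forall A, G A -> A \in unitmx.
Hypothesis hXG : forall A, X A -> G A.
Hypothesis hXK : forall A x, K x -> (X (A *m x) <-> X A).
Hypothesis hGK : forall A x, K x -> G A -> G (A *m x).
Hypothesis hZK : forall A x, K x -> Z A -> Z (A *m x).
Hypothesis hT : forall x, K x -> islin (T x).
Hypothesis hK1 : K 1%:M.
Hypothesis hKm : forall x y, K x -> K y -> K (x *m y).
Hypothesis hT1 : forall e, T 1%:M e = e.
Hypothesis hTm : forall x y e, K x -> K y -> T (x *m y) e = T x (T y e).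

Lemma goodF (f : Mat -> k) (F : Mat -> E) : regular_on G f -> good X Z F ->
  good X Z (fun A => f A *: F A).
Proof.
move=> hf [f1 f2 f3]; split.
- by move=> A hA; rewrite f1 // scaler0.
- by move=> A hA; rewrite f2 // scaler0.
- by apply: expand_mulf => //; apply: reg_sub hf.
Qed.

Lemma goodT x (F : Mat -> E) : K x -> good X Z F -> good X Z (fun A => T x (F (A *m x))).
Proof.
move=> Kx [f1 f2 f3]; split.
- move=> A hA; have -> : F (A *m x) = 0 by apply: f1 => /(hXK A Kx).
  exact/islin0/hT.
- move=> A hA; have -> : F (A *m x) = 0 by apply: f2; apply: hZK.
  exact/islin0/hT.
- apply: (expand_lin (hT Kx)); apply: expand_rmul => //.
  by move=> A XA; apply/(hXK A Kx).
Qed.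

Definition mact (f : Mat -> k) (u : C) : C :=
  match pselect (regular_on G f) with
  | left h => Car (goodF h (cgood u))
  | right _ => u end.

Definition act (x : Mat) (u : C) : C :=
  match pselect (K x) with
  | left h => Car (goodT h (cgood u))
  | right _ => u end.

Lemma mact_val f u A : regular_on G f -> cf (mact f u) A = f A *: cf u A.
Proof. by move=> hf; rewrite /mact; case: pselect. Qed.

Lemma act_val x u A : K x -> cf (act x u) A = T x (cf u (A *m x)).
Proof. by move=> Kx; rewrite /act; case: pselect. Qed.

Lemma act_lin x : K x -> islin (act x).
Proof.
move=> Kx a u v; apply: car_ext => A.
by rewrite cfD cfZ !act_val // cfD cfZ (hT Kx).
Qed.

Lemma act_rational : (forall u, expand K (fun x => act x u)) -> rational_module K act.
Proof.
move=> hloc; split.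
- by move=> x Kx; apply: act_lin.
- by move=> m; apply: car_ext => A; rewrite act_val // mulmx1 hT1.
- move=> x y m Kx Ky; apply: car_ext => A.
  rewrite act_val; last exact: hKm.
  by rewrite act_val // act_val // hTm // mulmxA.
- move=> m; have [r [g [S [hg e]]]] := expand_ord (hloc m).
  by exists r, S, g.
Qed.

Lemma act_kGH : (forall u, expand K (fun x => act x u)) -> kGH_module G K mact act.
Proof.
move=> hloc; split.
- exact: act_rational.
- move=> f hf a u v; apply: car_ext => A.
  by rewrite cfD cfZ !mact_val // cfD cfZ scalerDr !scalerA mulrC.
- move=> f g m hf hg; apply: car_ext => A.
  by rewrite cfD !mact_val //= ?scalerDl //; apply: reg_add.
- move=> f g m hf hg; apply: car_ext => A.
  by rewrite !mact_val //= ?scalerA //; apply: reg_mul.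
- move=> c m; apply: car_ext => A.
  by rewrite mact_val //; apply: reg_const.
- move=> f g hf e.
  have hg : regular_on G g by apply: reg_ext hf e.
  apply: functional_extensionality => u; apply: car_ext => A.
  rewrite !mact_val //.
  have [GA|nGA] := pselect (G A); first by rewrite e.
  have nXA : ~ X A by move=> /hXG.
  by case: (cgood u) => f1 _ _; rewrite f1 // !scaler0.
- move=> x f m Kx hf.
  have hf' : regular_on G (fun y => f (y *m x)).
    by apply: reg_rmul => // A GA; apply: hGK.
  apply: car_ext => A.
  by rewrite act_val // !mact_val // act_val // islinZ //; apply: hT.
Qed.

End Act.

Section Loc.
Variables (k : fieldType) (n : nat).
Local Notation Mat := 'M[k]_n.
Variables (X Z K : Mat -> Prop) (E : lmodType k) (T : Mat -> E -> E).
Local Notation C := (@car k n X Z E).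

Hypothesis hXu : forall A, X A -> A \in unitmx.
Hypothesis hXK : forall A x, K x -> (X (A *m x) <-> X A).
Hypothesis hZK : forall A x, K x -> Z A -> Z (A *m x).
Hypothesis hT : forall x, K x -> islin (T x).
Hypothesis hZ0 : forall A, ~ Z A.
Hypothesis hTexp : forall e, expand K (fun x => T x e).

Local Notation act := (@act k n X Z K E T hXu hXK hZK hT).

Definition elemf (g : Mat -> k) (e : E) (A : Mat) : E :=
  if pselect (X A) then g A *: e else 0.

Lemma goodE g e : regular_on X g -> good X Z (elemf g e).
Proof.
move=> hg; split.
- by move=> A nXA; rewrite /elemf; case: (pselect (X A)).
- by move=> A /hZ0.
- apply: (expand_ext (expand_mulf hg (expand_const X e))) => A XA.
  by rewrite /elemf; case: (pselect (X A)).
Qed.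

Definition elem g (hg : regular_on X g) (e : E) : C := Car (goodE e hg).

Lemma elem_val g (hg : regular_on X g) e A : cf (elem hg e) A = elemf g e A.
Proof. by []. Qed.

Lemma elem_lin g (hg : regular_on X g) : islin (elem hg).
Proof.
move=> a u v; apply: car_ext => A /=; rewrite /elemf; destruct (pselect (X A)).
  by rewrite scalerDr !scalerA mulrC.
by rewrite scaler0 addr0.
Qed.

Lemma loc_basic (a : Mat -> k) (ha : regular_on X a) (I : finType)
  (Af : I -> Mat -> k) (Cc : I -> Mat -> k) (hA : forall j, regular_on X (Af j)) :
  (forall j, regular_on K (Cc j)) ->
  (forall y x, a (y *m x) = \sum_j Cc j x * Af j y) ->
  forall e, expand K (fun x => act x (elem ha e)).
Proof.
move=> hC tr e.
apply: (expand_ext (Phi := fun x => \sum_(j <- index_enum I) Cc j x *: elem (hA j) (T x e))).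
  apply: expand_sum => j; apply: expand_mulf => //.
  by apply: expand_lin (hTexp e); apply: elem_lin.
move=> x Kx; apply: car_ext => A.
rewrite act_val // cf_sum.
under eq_bigr => j _ do rewrite cfZ elem_val.
rewrite elem_val /elemf.
destruct (pselect (X (A *m x))) as [XAx|XAx]; destruct (pselect (X A)) as [XA|XA].
- rewrite tr (islinZ (hT Kx)) scaler_suml; apply: eq_bigr => j _.
  by rewrite scalerA.
- by exfalso; apply: XA; apply/(hXK A Kx).
- by exfalso; apply: XAx; apply/(hXK A Kx).
- rewrite islin0; last exact: hT.
  by rewrite big1 // => j _ /=; rewrite scaler0.
Qed.

Lemma act_sum x (I : Type) (s : seq I) (F : I -> C) : K x ->
  act x (\sum_(i <- s) F i) = \sum_(i <- s) act x (F i).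
Proof. by move=> Kx; apply: islin_sum; apply: act_lin. Qed.

Lemma loc_elem g (hg : regular_on X g) e : expand K (fun x => act x (elem hg e)).
Proof.
have [I [Af [Cc [b [hA hC eg tr]]]]] := reg_family hg.
have de : elem hg e = \sum_(i <- index_enum I) b i *: elem (hA i X) e.
  apply: car_ext => A; rewrite cf_sum elem_val /elemf.
  under eq_bigr => i _ do rewrite cfZ elem_val /elemf.
  destruct (pselect (X A)) as [XA|XA] => /=.
    by rewrite eg // scaler_suml; apply: eq_bigr => i _; rewrite scalerA.
  by rewrite big1 // => i _; rewrite scaler0.
apply: (expand_ext (Phi := fun x => \sum_(i <- index_enum I) b i *: act x (elem (hA i X) e))).
  apply: expand_sum => i; apply: expand_mulf; first exact: reg_const.
  apply: (@loc_basic (Af i) (hA i X) I Af (Cc i) (fun j => hA j X)); last exact: tr.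
  by move=> j; apply: hC.
move=> x Kx; rewrite de act_sum //; apply: eq_bigr => i _.
by rewrite (islinZ (act_lin hXu hXK hZK hT Kx)).
Qed.

Lemma loc_all (u : C) : expand K (fun x => act x u).
Proof.
case: (cgood u) => f1 _ [I [g [S [hg e]]]].
have de : u = \sum_(i <- index_enum I) elem (hg i) (S i).
  apply: car_ext => A; rewrite cf_sum.
  under eq_bigr => i _ do rewrite elem_val /elemf.
  destruct (pselect (X A)) as [XA|XA] => /=; first by rewrite e.
  by rewrite f1 // big1.
apply: (expand_ext (Phi := fun x => \sum_(i <- index_enum I) act x (elem (hg i) (S i)))).
  by apply: expand_sum => i; apply: loc_elem.
by move=> x Kx; rewrite {1}de act_sum.
Qed.

End Loc.

Lemma fchoice (A B : Type) (P : A -> B -> Prop) :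
  (forall a, exists b, P a b) -> exists f : A -> B, forall a, P a (f a).
Proof.
move=> h; exists (fun a => proj1_sig (cid (h a))).
by move=> a; case: (cid (h a)).
Qed.

Section SpanInj.
Variables (k : fieldType) (M : lmodType k).

Lemma islinN' (E E' : lmodType k) (L : E -> E') : islin L -> forall u, L (- u) = - L u.
Proof. by move=> hL u; rewrite -scaleN1r islinZ // scaleN1r. Qed.
Lemma islinB (E E' : lmodType k) (L : E -> E') : islin L -> forall u v, L (u - v) = L u - L v.
Proof. by move=> hL u v; rewrite islinD // islinN'. Qed.

Lemma span_inj m (u : 'I_m -> M) : exists r (iota : 'rV[k]_r -> M),
  [/\ islin iota, injective iota,
      forall w, exists c : 'I_m -> k, iota w = \sum_t c t *: u t &
      forall t, exists w, iota w = u t].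
Proof.
elim: m u => [|m IH] u.
  exists 0%N, (fun _ => 0); split.
  - by move=> a v w; rewrite scaler0 addr0.
  - by move=> v w _; apply/rowP => -[].
  - by move=> w; exists (fun _ => 0); rewrite big_ord0.
  - by case.
have [r [iota [hl hi hs hp]]] := IH (fun t => u (lift ord0 t)).
have [[w0 e0]|nin] := pselect (exists w, iota w = u ord0).
  exists r, iota; split => //.
  - move=> w; have [c ec] := hs w.
    exists (fun t => if unlift ord0 t is Some j then c j else 0).
    by rewrite big_ord_recl unlift_none scale0r add0r ec; apply: eq_bigr => j _; rewrite liftK.
  - move=> t; case: (unliftP ord0 t) => [j ->|->]; last by exists w0.
    exact: hp.
pose io (w : 'rV[k]_(r + 1)) := iota (lsubmx w) + rsubmx w 0 0 *: u ord0.
exists (r + 1)%N, io; split.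
- move=> a v w; rewrite /io.
  have -> : lsubmx (a *: v + w) = a *: lsubmx v + lsubmx w by rewrite linearP.
  have -> : rsubmx (a *: v + w) 0 0 = a * rsubmx v 0 0 + rsubmx w 0 0.
    by rewrite linearP !mxE.
  by rewrite hl scalerDr scalerDl -scalerA addrACA.
- move=> v w e.
  set dl := lsubmx v - lsubmx w; set db := rsubmx v 0 0 - rsubmx w 0 0.
  have H : iota dl + db *: u ord0 = 0.
    have H0 : io v - io w = 0 by rewrite e subrr.
    by rewrite /dl /db islinB // scalerBl -H0 /io opprD addrACA.
  have db0 : db = 0.
    apply/eqP/negPn/negP => db0; apply: nin.
    exists (- db^-1 *: dl); rewrite scaleNr (islinN' hl) (islinZ hl).
    have -> : iota dl = - (db *: u ord0) by apply/eqP; rewrite -addr_eq0 H.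
    by rewrite scalerN opprK scalerA mulVf // scale1r.
  move: H; rewrite db0 scale0r addr0 => H.
  have : iota dl = iota 0 by rewrite H (islin0 hl).
  move/hi/eqP; rewrite subr_eq0 => /eqP el.
  move/eqP: db0; rewrite subr_eq0 => /eqP er.
  rewrite -(hsubmxK v) -(hsubmxK w) el; congr row_mx.
  by apply/matrixP => i j; rewrite !ord1.
- move=> w; have [c ec] := hs (lsubmx w).
  exists (fun t => if unlift ord0 t is Some j then c j else rsubmx w 0 0).
  rewrite /io big_ord_recl unlift_none ec addrC; congr (_ + _).
  by apply: eq_bigr => j _; rewrite liftK.
- move=> t; case: (unliftP ord0 t) => [j ->|->].
    have [w ew] := hp j; exists (row_mx w 0).
    by rewrite /io row_mxKl row_mxKr mxE scale0r addr0.
  exists (row_mx 0 (const_mx 1)).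
  by rewrite /io row_mxKl row_mxKr mxE scale1r (islin0 hl) add0r.
Qed.
End SpanInj.

Section FinSpan.
Variables (k : fieldType) (V : vectType k).

Lemma finite_span (S : V -> Prop) : exists s : seq V,
  [/\ free s, forall v, v \in s -> S v & forall v, S v -> v \in <<s>>%VS].
Proof.
suff aux : forall N (s : seq V), free s -> (forall v, v \in s -> S v) ->
    (\dim (fullv : {vspace V}) - size s <= N)%N ->
    exists s', [/\ free s', forall v, v \in s' -> S v & forall v, S v -> v \in <<s'>>%VS].
  by apply: (aux _ [::]) => //; rewrite /free /= span_nil dimv0.
elim=> [|N IH] s fs hs hN.
  exists s; split => // v Sv; apply/negPn/negP => nv.
  have fs' : free (v :: s) by rewrite free_cons nv.
  have := dimvS (subvf <<v :: s>>%VS); rewrite (eqP fs') /=.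
  move: hN; set D := \dim _; lia.
have [done|] := pselect (forall v, S v -> v \in <<s>>%VS); first by exists s.
move=> /existsNP [v /not_implyP [Sv nv]].
apply: (IH (v :: s)).
- by rewrite free_cons fs andbT; apply/negP.
- by move=> w; rewrite inE => /orP [/eqP ->|/hs].
- by move: hN; rewrite /=; lia.
Qed.
End FinSpan.

Lemma sum_enum (k : fieldType) (M : lmodType k) (I : finType) (F : I -> M) :
  \sum_(i : I) F i = \sum_(j < #|I|) F (enum_val j).
Proof. rewrite -(big_enum_val F). by apply: eq_bigl => i; rewrite inE. Qed.

Section FD.
Variables (k : fieldType) (n : nat).
Local Notation Mat := 'M[k]_n.
Variables (M : lmodType k) (K : Mat -> Prop).

Lemma combine mm (Phi : 'I_mm -> Mat -> M) : (forall b, expand K (Phi b)) ->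
  exists (I : finType) (g : I -> M) (Cf : 'I_mm -> I -> Mat -> k),
    (forall b t, regular_on K (Cf b t)) /\
    forall b x, K x -> Phi b x = \sum_t Cf b t x *: g t.
Proof.
elim: mm Phi => [|mm IH] Phi hPhi.
  by exists 'I_0, (fun _ => 0), (fun _ _ _ => 0); split; case.
have [I1 [g1 [Cf1 [h1 e1]]]] := IH (fun b => Phi (lift ord0 b)) (fun b => hPhi _).
have [I2 [g2 [S2 [h2 e2]]]] := hPhi ord0.
exists (I1 + I2)%type, (fun t => match t with inl i => g1 i | inr j => S2 j end),
  (fun b t => match unlift ord0 b, t with
              | Some b', inl i => Cf1 b' i
              | None, inr j => g2 j
              | _, _ => fun _ => 0 end); split.
  by move=> b [i|j]; case: (unlift ord0 b) => [b'|] //; apply: reg_const.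
move=> b x Kx; rewrite big_sumType /=.
case: (unliftP ord0 b) => [b' ->|->].
  by rewrite e1 // [X in _ + X]big1 ?addr0 // => j _; rewrite scale0r.
by rewrite e2 // [X in X + _]big1 ?add0r // => j _; rewrite scale0r.
Qed.

Variable act : Mat -> M -> M.
Hypothesis hKu : forall A, K A -> A \in unitmx.
Hypothesis hK1 : K 1%:M.
Hypothesis hKm : forall x y, K x -> K y -> K (x *m y).
Hypothesis hal : forall x, K x -> islin (act x).
Hypothesis ha1 : forall m, act 1%:M m = m.
Hypothesis ham : forall x y m, K x -> K y -> act (x *m y) m = act x (act y m).

Lemma islin_row d (V : vectType k) (ts : d.-tuple V) :
  islin (fun v => \row_(i < d) coord ts i v).
Proof. by move=> a u v; apply/rowP => i; rewrite !mxE linearP. Qed.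

Lemma fd mm (u : 'I_mm -> M) : (forall b, expand K (fun x => act x (u b))) ->
  exists d (aW : Mat -> 'rV[k]_d -> 'rV[k]_d) (kap : 'rV[k]_d -> M),
  [/\ rational_module K aW, islin kap /\ injective kap,
      (forall x w, K x -> kap (aW x w) = act x (kap w)),
      (forall b, exists w, kap w = u b) &
      (forall w, exists s (xs : 'I_s -> Mat) (bs : 'I_s -> 'I_mm) (cs : 'I_s -> k),
        (forall j, K (xs j)) /\ kap w = \sum_j cs j *: act (xs j) (u (bs j)))].
Proof.
move=> hu.
have [I [g [Cf [hCf eCf]]]] := combine (Phi := fun b x => act x (u b)) hu.
have [r [io [hl hi _ hp]]] := span_inj (fun t : 'I_#|I| => g (enum_val t)).
have [p hpt] := fchoice hp.
pose V y b := \sum_(t < #|I|) Cf b (enum_val t) y *: p t.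
have eV : forall y b, K y -> io (V y b) = act y (u b).
  move=> y b Ky; rewrite islin_sum // eCf // [RHS]sum_enum.
  by apply: eq_bigr => t _; rewrite islinZ // hpt.
pose S v := exists y b, K y /\ io v = act y (u b).
have [s [fs sS spS]] := finite_span S.
pose d := size s.
pose ts := in_tuple s.
have hxs : forall j : 'I_d, exists yb : Mat * 'I_mm, K yb.1 /\ io s`_j = act yb.1 (u yb.2).
  move=> j; have [y [b [Ky e]]] := sS _ (mem_nth 0 (ltn_ord j)).
  by exists (y, b).
have [xb hxb] := fchoice hxs.
pose xs j := (xb j).1; pose bs j := (xb j).2.
pose kap (w : 'rV[k]_d) := io (\sum_(j < d) w 0 j *: s`_j).
have hkl : islin kap.
  move=> a v w; rewrite /kap -hl; congr io.
  rewrite scaler_sumr -big_split /=; apply: eq_bigr => j _.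
  by rewrite !mxE scalerDl scalerA.
have kapE : forall w, kap w = \sum_(j < d) w 0 j *: act (xs j) (u (bs j)).
  move=> w; rewrite /kap islin_sum //; apply: eq_bigr => j _.
  by rewrite islinZ //; case: (hxb j) => _ ->.
have hki : injective kap.
  move=> v w /hi /eqP; rewrite -subr_eq0 -sumrB.
  under eq_bigr => j _ do rewrite -scalerBl.
  move=> /eqP h0; apply/rowP => j.
  apply/eqP; rewrite -subr_eq0; apply/eqP.
  have /freeP fs' : free ts by [].
  exact: (fs' (fun j => v 0 j - w 0 j)).
pose Wv x (w : 'rV[k]_d) := \sum_(j < d) w 0 j *: V (x *m xs j) (bs j).
have eW : forall x w, K x -> act x (kap w) = io (Wv x w).
  move=> x w Kx; rewrite kapE (islin_sum _ _ (hal Kx)) /Wv (islin_sum _ _ hl); apply: eq_bigr => j _.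
  have Kj : K (xs j) by case: (hxb j).
  rewrite (islinZ (hal Kx)) (islinZ hl) eV; last exact: hKm.
  by rewrite ham.
have Wspan : forall x w, K x -> Wv x w \in <<s>>%VS.
  move=> x w Kx; apply: memv_suml => j _; apply: memvZ; apply: spS.
  have Kj : K (xs j) by case: (hxb j).
  by exists (x *m xs j), (bs j); split; [apply: hKm | apply: eV; apply: hKm].
pose pre (y : M) : 'rV[k]_r := match pselect (exists v, io v = y) with
  | left h => proj1_sig (cid h) | right _ => 0 end.
have preE : forall v, pre (io v) = v.
  move=> v; rewrite /pre; destruct (pselect (exists v0, io v0 = io v)) as [h|h].
    by destruct (cid h) as [v' hv]; apply: hi.
  by exfalso; apply: h; exists v.
pose L v := \row_(i < d) coord ts i v.
pose aW x w := match pselect (K x) with left _ => L (pre (act x (kap w))) | right _ => w end.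
have aWE : forall x w, K x -> aW x w = L (Wv x w).
  move=> x w Kx; rewrite /aW; destruct (pselect (K x)) as [h|h] => //.
  by rewrite eW // preE.
have kapL : forall v, v \in <<s>>%VS -> kap (L v) = io v.
  move=> v vs; rewrite /kap; congr io.
  rewrite {2}(coord_span (X := ts) vs); apply: eq_bigr => i _.
  by rewrite mxE.
have kap_aW : forall x w, K x -> kap (aW x w) = act x (kap w).
  by move=> x w Kx; rewrite aWE // kapL ?Wspan // eW.
exists d, aW, kap; split => //.
- split.
  + move=> x Kx a v w; apply: hki.
    by rewrite kap_aW // hkl hkl !kap_aW // hal.
  + move=> w; apply: hki; rewrite kap_aW //.
  + move=> x y w Kx Ky; apply: hki.
    rewrite kap_aW; last exact: hKm.
    by rewrite !kap_aW // ham.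
  + move=> w.
    have : expand K (fun x => aW x w).
      apply: (expand_ext (Phi := fun x => L (Wv x w))); last first.
        by move=> x Kx; rewrite aWE.
      apply: expand_lin; first exact: islin_row.
      apply: expand_sum => j; apply: expand_mulf; first exact: reg_const.
      apply: expand_sum => t; apply: expand_mulf; last exact: expand_const.
      have Kj : K (xs j) by case: (hxb j).
      by apply: reg_rmul => // A KA; apply: hKm.
    move=> /expand_ord [q [gq [Sq [hq eq]]]].
    by exists q, Sq, gq.
- move=> b; exists (L (V 1%:M b)).
  rewrite kapL; first by rewrite eV // ha1.
  by apply: spS; exists 1%:M, b; split => //; apply: eV.
- move=> w; exists d, xs, bs, (fun j => w 0 j); split; last exact: kapE.
  by move=> j; case: (hxb j).
Qed.
End FD.

Lemma linfunE' (k : fieldType) (V W : vectType k) (f : V -> W) : islin f -> forall v, linfun f v = f v.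
Proof.
move=> hf v.
pose F : {linear V -> W} := HB.pack f (GRing.isLinear.Build k V W _ f (fun a u w => hf a u w)).
exact: (lfunE F v).
Qed.

Lemma invmxM' (k : fieldType) n (A B : 'M[k]_n) : A \in unitmx -> B \in unitmx ->
  invmx (A *m B) = invmx B *m invmx A.
Proof.
move=> uA uB; have uAB : A *m B \in unitmx by rewrite unitmx_mul uA.
have h : (invmx B *m invmx A) *m (A *m B) = 1%:M.
  by rewrite mulmxA (mulmxKV uA) (mulVmx uB).
by rewrite -[LHS]mul1mx -h -mulmxA (mulmxV uAB) mulmx1.
Qed.

Section Main.
Variables (k : fieldType) (n : nat).
Local Notation Mat := 'M[k]_n.
Variables (G H : Mat -> Prop).
Hypothesis hGu : forall A, G A -> A \in unitmx.
Hypothesis hG1 : G 1%:M.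
Hypothesis hGm : forall x y, G x -> G y -> G (x *m y).
Hypothesis hGi : forall x, G x -> G (invmx x).
Hypothesis hHu : forall A, H A -> A \in unitmx.
Hypothesis hH1 : H 1%:M.
Hypothesis hHm : forall x y, H x -> H y -> H (x *m y).
Hypothesis hHi : forall x, H x -> H (invmx x).
Hypothesis hHG : forall x, H x -> G x.

Lemma subgK (X K : Mat -> Prop) : (forall x y, X x -> X y -> X (x *m y)) ->
  (forall x, X x -> X (invmx x)) -> (forall A, X A -> A \in unitmx) ->
  (forall x, K x -> X x) -> forall A x, K x -> (X (A *m x) <-> X A).
Proof.
move=> hm hi hu hKX A x Kx; split => h; last by apply: hm => //; apply: hKX.
have ux : x \in unitmx by apply/hu/hKX.
by rewrite -(mulmxK ux A); apply: hm => //; apply/hi/hKX.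
Qed.

Definition Z0 : Mat -> Prop := fun _ => False.

Variables (V : vectType k) (aV : Mat -> V -> V).
Hypothesis hV : rational_module H aV.

Local Notation E := 'End(V).

Definition Aop (x : Mat) : E := linfun (aV x).

Lemma AopE x v : H x -> Aop x v = aV x v.
Proof. by move=> Hx; apply: linfunE' => a u w; apply: (rm_lin hV). Qed.

Definition Tm (x : Mat) (e : E) : E := (e \o Aop (invmx x))%VF.

Lemma hT : forall x, H x -> islin (Tm x).
Proof. by move=> x _ a u v; rewrite /Tm comp_lfunDl comp_lfunZl. Qed.

Lemma hT1 e : Tm 1%:M e = e.
Proof.
apply/lfunP => v; rewrite /Tm comp_lfunE invmx1 AopE //.
by rewrite (rm_one hV).
Qed.

Lemma hTm x y e : H x -> H y -> Tm (x *m y) e = Tm x (Tm y e).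
Proof.
move=> Hx Hy; apply/lfunP => v; rewrite /Tm !comp_lfunE.
rewrite invmxM' ?hHu //.
have Hy' := hHi Hy; have Hx' := hHi Hx.
rewrite AopE; last exact: hHm.
by rewrite !AopE // (rm_mul hV).
Qed.

Lemma Aop_expand : expand H Aop.
Proof.
pose B := vbasis (fullv : {vspace V}).
pose Lj (j : 'I_(\dim (fullv : {vspace V}))) (w : V) : E := linfun (fun v => coord B j v *: w).
have hLj : forall j (w : V) v, Lj j w v = coord B j v *: w.
  by move=> j w v; apply: linfunE' => a u z; rewrite linearP scalerDl scalerA.
apply: (expand_ext (Phi := fun x => \sum_j Lj j (aV x B`_j))).
  apply: expand_sum => j; apply: expand_lin.
    by move=> a u w; apply/lfunP => v; rewrite add_lfunE scale_lfunE !hLj scalerDr !scalerA mulrC.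
  have [r [ms [fs [hfs e]]]] := rm_loc hV B`_j.
  exact: (ord_expand hfs e).
move=> x Hx; apply/lfunP => v; rewrite sum_lfunE AopE //.
rewrite [in RHS](coord_vbasis (memvf v)) (islin_sum _ _ (rm_lin hV Hx)).
by apply: eq_bigr => j _; rewrite hLj (islinZ (rm_lin hV Hx)).
Qed.

Lemma hTexp e : expand H (fun x => Tm x e).
Proof.
apply: (expand_lin (L := fun B : E => (e \o B)%VF)).
  by move=> a u v; rewrite comp_lfunDr comp_lfunZr.
by apply: expand_inv => //; apply: Aop_expand.
Qed.


Let hXKG : forall A x, H x -> (G (A *m x) <-> G A) := subgK hGm hGi hGu hHG.
Let hXKH : forall A x, H x -> (H (A *m x) <-> H A) := subgK hHm hHi hHu (fun x h => h).
Let hZK0 : forall A x, H x -> Z0 A -> Z0 (A *m x) := fun _ _ _ f => f.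
Let hZKH : forall A x, H x -> H A -> H (A *m x) := fun A x hx ha => hHm ha hx.
Let hGK : forall A x, H x -> G A -> G (A *m x) := fun A x hx ha => hGm ha (hHG hx).
Let hGG : forall A, G A -> G A := fun A h => h.

Local Notation Q := (@car k n G Z0 E).
Local Notation R := (@car k n H Z0 E).
Local Notation P := (@car k n G H E).

Let aQ := @act k n G Z0 H E Tm hGu hXKG hZK0 hT.
Let aR := @act k n H Z0 H E Tm hHu hXKH hZK0 hT.
Let aP := @act k n G H H E Tm hGu hXKG hZKH hT.
Let mQ := @mact k n G Z0 G E hGG.
Let mR := @mact k n H Z0 G E hHG.
Let mP := @mact k n G H G E hGG.

Lemma locQ u : expand H (fun x => aQ x u).
Proof. exact: (loc_all _ _ _ _ (fun A (f : Z0 A) => f) hTexp). Qed.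
Lemma locR u : expand H (fun x => aR x u).
Proof. exact: (loc_all _ _ _ _ (fun A (f : Z0 A) => f) hTexp). Qed.

Lemma modQ : kGH_module G H mQ aQ.
Proof. exact: (act_kGH hGu hGG hGK hH1 hHm hT1 hTm locQ). Qed.
Lemma modR : kGH_module G H mR aR.
Proof. exact: (act_kGH hGu hHG hGK hH1 hHm hT1 hTm locR). Qed.


Lemma goodPQ (F : Mat -> E) : good G H F -> good G Z0 F.
Proof. by case=> f1 f2 f3; split. Qed.

Definition maskH (F : Mat -> E) (A : Mat) : E := if pselect (H A) then F A else 0.

Lemma goodQR (F : Mat -> E) : good G Z0 F -> good H Z0 (maskH F).
Proof.
case=> f1 f2 f3; split => //.
- by move=> A nHA; rewrite /maskH; destruct (pselect (H A)).
- apply: (expand_ext (Phi := F)); first exact: (expand_sub hHG f3).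
  by move=> A HA; rewrite /maskH; destruct (pselect (H A)).
Qed.

Definition fP (u : P) : Q := Car (goodPQ (cgood u)).
Definition gQ (q : Q) : R := Car (goodQR (cgood q)).

Lemma fP_inj : injective fP.
Proof. by move=> u v e; apply: car_ext => A; have := f_equal (fun w => cf w A) e. Qed.

Lemma fP_lin : islin fP.
Proof. by move=> a u v; apply: car_ext. Qed.

Lemma fP_eq x u : H x -> fP (aP x u) = aQ x (fP u).
Proof. by move=> Hx; apply: car_ext => A; rewrite /= !act_val. Qed.

Lemma locP u : expand H (fun x => aP x u).
Proof.
have rQ := km_rat modQ.
have [d [aW [kap [rat [hkl hki] heq himg hspan]]]] :=
  @fd k n Q H aQ hH1 hHm (rm_lin rQ) (rm_one rQ) (rm_mul rQ) 1%N (fun _ => fP u) (fun _ => locQ _).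
have [w0 ew0] := himg ord0.
have [r [ms [fs [hfs efs]]]] := rm_loc rat w0.
have hp : forall i, exists p, fP p = kap (ms i).
  move=> i; have [s0 [xs [bs [cs [hxs ->]]]]] := hspan (ms i).
  exists (\sum_j cs j *: aP (xs j) u).
  rewrite (islin_sum _ _ fP_lin); apply: eq_bigr => j _.
  by rewrite (islinZ fP_lin) fP_eq.
have [pp hpp] := fchoice hp.
apply: (ord_expand (S := pp) hfs) => x Hx; apply: fP_inj.
rewrite fP_eq // -ew0 -heq // efs // (islin_sum _ _ hkl) (islin_sum _ _ fP_lin).
by apply: eq_bigr => i _; rewrite (islinZ hkl) (islinZ fP_lin) hpp.
Qed.

Lemma modP : kGH_module G H mP aP.
Proof. exact: (act_kGH hGu hGG hGK hH1 hHm hT1 hTm locP). Qed.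

Lemma morf : kGH_morphism G H mP aP mQ aQ fP.
Proof.
split.
- exact: fP_lin.
- by move=> f m hf; apply: car_ext => A; rewrite /= !mact_val.
- by move=> x m Hx; rewrite fP_eq.
Qed.

Lemma morg : kGH_morphism G H mQ aQ mR aR gQ.
Proof.
split.
- move=> a u v; apply: car_ext => A; rewrite /= /maskH.
  by destruct (pselect (H A)); rewrite ?scaler0 ?addr0.
- move=> f m hf; apply: car_ext => A; rewrite [RHS]mact_val //= /maskH.
  destruct (pselect (H A)) => /=; last by rewrite scaler0.
  by rewrite mact_val.
- move=> x m Hx; apply: car_ext => A; rewrite [RHS]act_val //= /maskH.
  destruct (pselect (H A)) as [h|h]; destruct (pselect (H (A *m x))) as [h'|h'] => /=.
  + by rewrite act_val.
  + by exfalso; apply: h'; apply/(hXKH A Hx).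
  + by exfalso; apply: h; apply/(hXKH A Hx).
  + by rewrite (islin0 (hT Hx)).
Qed.

Lemma reg_extend (f : Mat -> k) : regular_on H f ->
  exists f', regular_on G f' /\ forall A, H A -> f' A = f A.
Proof.
case=> p [N [hp ep]]; exists (fun A => p A / \det A ^+ N); split.
  by exists p, N.
by move=> A HA; rewrite ep.
Qed.

Lemma kernelQ : forall q, gQ q = 0 <-> exists p, fP p = q.
Proof.
move=> q; split.
  move=> e.
  have hz : forall A, H A -> cf q A = 0.
    move=> A HA; have := f_equal (fun w => cf w A) e; rewrite /= /maskH.
    by destruct (pselect (H A)).
  have gq : good G H (cf q) by case: (cgood q) => f1 f2 f3; split.
  by exists (Car gq); apply: car_ext.
case=> p <-; apply: car_ext => A; rewrite /= /maskH.
destruct (pselect (H A)) as [h|h] => //.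
by case: (cgood p) => _ f2 _; rewrite f2.
Qed.

Lemma surjQ : forall r, exists q, gQ q = r.
Proof.
move=> r; case: (cgood r) => f1 _ [I [ga [S [hga ega]]]].
have [ge hge] := fchoice (fun i => reg_extend (hga i)).
pose F A : E := if pselect (G A) then \sum_i ge i A *: S i else 0.
have gF : good G Z0 F.
  split => //.
  - by move=> A nGA; rewrite /F; destruct (pselect (G A)).
  - apply: (expand_ext (Phi := fun A => \sum_i ge i A *: S i)).
      apply: expand_sum => i; apply: expand_mulf; first by case: (hge i).
      exact: expand_const.
    by move=> A GA; rewrite /F; destruct (pselect (G A)).
exists (Car gF); apply: car_ext => A; rewrite /= /maskH /F.
destruct (pselect (H A)) as [h|h]; last by rewrite f1.
destruct (pselect (G A)) as [g|g]; last by exfalso; apply/g/hHG.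
by rewrite ega //; apply: eq_bigr => i _; rewrite (proj2 (hge i) A h).
Qed.

Lemma goodr0 : good H Z0 (maskH Aop).
Proof.
split => //.
- by move=> A nHA; rewrite /maskH; destruct (pselect (H A)).
- apply: (expand_ext Aop_expand).
  by move=> A HA; rewrite /maskH; destruct (pselect (H A)).
Qed.

Definition r0 : R := Car goodr0.

Lemma r0_fixed : fixed_vec H aR r0.
Proof.
move=> x Hx; apply: car_ext => A; rewrite act_val //= /maskH.
destruct (pselect (H A)) as [h|h]; destruct (pselect (H (A *m x))) as [h'|h'] => /=.
- have Hi := hHi Hx.
  apply/lfunP => v; rewrite /Tm comp_lfunE !AopE //.
  rewrite -(rm_mul hV) //.
  by rewrite mulmxK //; apply: hHu.
- by exfalso; apply: h'; apply/(hXKH A Hx).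
- by exfalso; apply: h; apply/(hXKH A Hx).
- by rewrite /Tm comp_lfun0l.
Qed.

Lemma main_F : exact_in G H -> exists F : Mat -> E,
  [/\ good G Z0 F, forall y h v, H h -> F (y *m h) v = F y (aV h v)
    & forall v, F 1%:M v = v].
Proof.
move=> hex.
have [_ _ h3] := hex _ _ _ _ _ _ _ _ _ _ _ modP modQ modR morf morg fP_inj kernelQ surjQ.
have [q [fq eq]] := h3 r0 r0_fixed.
exists (cf q); split.
- exact: cgood.
- move=> y h v Hh; have Hi := hHi Hh.
  have := f_equal (fun w => cf w y) (fq h Hh); rewrite act_val //= => e.
  have := f_equal (fun B : E => B (aV h v)) e; rewrite /Tm comp_lfunE AopE ?hHi // => <-.
  by rewrite -(rm_mul hV) ?hHi // (mulVmx (hHu Hh)) (rm_one hV).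
- move=> v; have := f_equal (fun w => cf w 1%:M) eq; rewrite /= /maskH.
  destruct (pselect (H 1%:M)) as [h|h]; last by exfalso.
  by move=> /= ->; rewrite AopE // (rm_one hV).
Qed.

End Main.

Section Final.
Variables (k : fieldType) (n : nat).
Local Notation Mat := 'M[k]_n.
Variables (G H : Mat -> Prop).
Hypothesis hGu : forall A, G A -> A \in unitmx.
Hypothesis hG1 : G 1%:M.
Hypothesis hGm : forall x y, G x -> G y -> G (x *m y).
Hypothesis hGi : forall x, G x -> G (invmx x).
Hypothesis hHG : forall x, H x -> G x.
Variables (V : vectType k) (aV : Mat -> V -> V).
Variable F : Mat -> 'End(V).
Hypothesis gF : good G (@Z0 k n) F.
Hypothesis F2 : forall y h v, H h -> F (y *m h) v = F y (aV h v).
Hypothesis F3 : forall v, F 1%:M v = v.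

Local Notation Mv := (@car k n G (@Z0 k n) V).

Lemma goodPhi v : good G (@Z0 k n) (fun A => F A v).
Proof.
case: gF => f1 f2 f3; split => //.
- by move=> A nGA; rewrite f1 // zero_lfunE.
- apply: (expand_lin (L := fun B : 'End(V) => B v)) => //.
  by move=> a B C; rewrite add_lfunE scale_lfunE.
Qed.

Definition Phi v : Mv := Car (goodPhi v).

Lemma Phi_lin : islin Phi.
Proof. by move=> a u v; apply: car_ext => A /=; rewrite linearP. Qed.

Let hXKGG : forall A x, G x -> (G (A *m x) <-> G A) := subgK hGm hGi hGu (fun x h => h).
Let hZK0G : forall A x, G x -> @Z0 k n A -> @Z0 k n (A *m x) := fun _ _ _ f => f.
Let hTid : forall x, G x -> islin (fun e : V => e).
Proof. by move=> x _ a u v. Qed.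

Let actG := @act k n G (@Z0 k n) G V (fun _ e => e) hGu hXKGG hZK0G hTid.

Lemma locG u : expand G (fun x => actG x u).
Proof. exact: (loc_all _ _ _ _ (fun A (f : @Z0 k n A) => f) (fun e => expand_const G e)). Qed.

Lemma ratG : rational_module G actG.
Proof. exact: (@act_rational k n G (@Z0 k n) G V (fun _ e => e) hGu hXKGG hZK0G hTid hG1 hGm (fun e => erefl) (fun _ _ _ _ _ => erefl) locG). Qed.

Lemma final_obs : exists (W : vectType k) (aW : Mat -> W -> W) (phi : V -> W),
  [/\ rational_module G aW,
      forall (a : k) (u v : V), phi (a *: u + v) = a *: phi u + phi v,
      injective phi &
      forall x v, H x -> phi (aV x v) = aW x (phi v)].
Proof.
pose B := vbasis (fullv : {vspace V}).
have [d [aW [kap [rat [hkl hki] heq himg _]]]] :=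
  @fd k n Mv G actG hG1 hGm (rm_lin ratG) (rm_one ratG) (rm_mul ratG) (\dim (fullv : {vspace V}))
    (fun b => Phi B`_b) (fun b => locG _).
have [wb hwb] := fchoice himg.
pose phi v := \sum_b coord B b v *: wb b.
have kphi : forall v, kap (phi v) = Phi v.
  move=> v; rewrite /phi (islin_sum _ _ hkl).
  under eq_bigr => b _ do rewrite (islinZ hkl) hwb.
  rewrite {2}(coord_vbasis (memvf v)) (islin_sum _ _ Phi_lin).
  by apply: eq_bigr => b _; rewrite (islinZ Phi_lin).
exists [the vectType k of 'rV[k]_d], aW, phi; split => //.
- move=> a u v; rewrite /phi scaler_sumr -big_split /=; apply: eq_bigr => b _.
  by rewrite linearP scalerDl scalerA.
- move=> u v e; have e' : Phi u = Phi v by rewrite -!kphi e.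
  by have := f_equal (fun w => cf w 1%:M) e'; rewrite /= !F3.
- move=> x v Hx; have Gx := hHG Hx; apply: hki.
  rewrite heq // !kphi; apply: car_ext => A.
  by rewrite act_val //= F2.
Qed.

End Final.

Theorem proposition4p9 (k : closedFieldType) (n : nat) (G H : 'M[k]_n -> Prop) :
  closed_subgroup G -> closed_subgroup H -> (forall x, H x -> G x) ->
  exact_in G H -> observable G H.
Proof.
move=> [zG [G1 Gm Gi]] [zH [H1 Hm Hi]] HG hex V aV hV.
have hGu : forall A, G A -> A \in unitmx.
  by case: zG => S [_ hS] A /hS [].
have hHu : forall A, H A -> A \in unitmx.
  by case: zH => S [_ hS] A /hS [].
have [F [gF F2 F3]] := main_F hGu Gm Gi hHu H1 Hm Hi HG hV hex.
exact: (final_obs hGu G1 Gm Gi HG gF F2 F3).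
Qed.
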